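(* If $\Gamma$ is $\varepsilon$-free, $\Gamma\vdash^\varepsilon M:\tau$, and $\vdash^\varepsilon M\Downarrow R$, then $R=v$ for some $v\in V^\varepsilon$ with $\Gamma\vdash^\varepsilon v:\tau$. In particular, if $\tau=\triangleright_\alpha\tau_0$, then $v=\blacktriangleright_\alpha N$ for some $N$ with $\Gamma^{-\alpha}\vdash^\varepsilon N:\tau_0$.
   Context: MiniML. Transition variables $\alpha,\beta$; transitions $A,B$ are finite sequences of them ($\varepsilon$ empty). Types $\tau::=\mathbf{int}\mid\mathbf{bool}\mid\tau\to\tau\mid\triangleright_\alpha\tau\mid\forall\alpha.\tau$; terms $M ::= x\mid n\mid bv\mid M=M\mid M+M\mid M-M\mid M*M\mid \mathbf{if}\,M\,\mathbf{then}\,M\,\mathbf{else}\,M\mid \mathbf{fix}\,f{:}\tau\to\sigma.M\mid\lambda x{:}\tau.M\mid MM\mid\blacktriangleright_\alpha M\mid\blacktriangleleft_\alpha M\mid\Lambda\alpha.M\mid M\,A$ ($n\in\mathbb{Z}$, $bv\in\{\mathbf{true},\mathbf{false}\}$). For $B=\beta_1\cdots\beta_k$, $\triangleright_B\tau=\triangleright_{\beta_1}\cdots\triangleright_{\beta_k}\tau$, $\blacktriangleright_BM=\blacktriangleright_{\beta_1}\cdots\blacktriangleright_{\beta_k}M$, $\blacktriangleleft_BM=\blacktriangleleft_{\beta_k}\cdots\blacktriangleleft_{\beta_1}M$; $\tau[\alpha:=B]$, $M[\alpha:=B]$ are capture-avoiding, replacing $\alpha$ by $B$ in transitions and $\triangleright_\alpha,\blacktriangleright_\alpha,\blacktriangleleft_\alpha$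 by $\triangleright_B,\blacktriangleright_B,\blacktriangleleft_B$. A context $\Gamma$ is a finite set $\{x_i:\tau_i@A_i\}$ with distinct $x_i$; it is $\varepsilon$-free if $A\ne\varepsilon$ for every $x:\tau@A\in\Gamma$; $\Gamma^{-A}=\{x:\tau@B\mid x:\tau@AB\in\Gamma\}$. Typing $\Gamma\vdash^AM:\tau$: (Var) $x:\tau@A\in\Gamma\Rightarrow\Gamma\vdash^Ax:\tau$; (Abs),(App) standard at a fixed stage $A$ with the bound variable declared at stage $A$; (Quote) $\Gamma\vdash^{A\alpha}M:\tau\Rightarrow\Gamma\vdash^A\blacktriangleright_\alpha M:\triangleright_\alpha\tau$; (Unquote) $\Gamma\vdash^AM:\triangleright_\alpha\tau\Rightarrow\Gamma\vdash^{A\alpha}\blacktriangleleft_\alpha M:\tau$; (Gen) $\Gamma\vdash^AM:\tau$, $\alpha$ not free in $\Gamma$ or $A$ $\Rightarrow\Gamma\vdash^A\Lambda\alpha.M:\forall\alpha.\tau$; (Ins) $\Gamma\vdash^AM:\forall\alpha.\tau\Rightarrow\Gamma\vdash^AM\,B:\tau[\alpha:=B]$; integer/Boolean constants have types $\mathbf{int}$/$\mathbf{bool}$ at any stage; $+,-,*$ take two $\mathbf{int}$ to $\mathbf{int}$, $=$ two $\mathbf{int}$ to $\mathbf{bool}$; $\mathbf{if}$ takes $\mathbf{bool}$ and two branches of a common type $\tau$ to $\tau$; (Fix) $\Gamma,f:\tau\to\sigma@A\vdash^AM:\tau\to\sigma\Rightarrow\Gamma\vdash^A\mathbf{fix}\,f{:}\tau\to\sigma.M:\tau\to\sigma$.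 Values: $V^\varepsilon ::= n\mid\mathbf{true}\mid\mathbf{false}\mid\lambda x{:}\tau.M\mid\blacktriangleright_\alpha V^\alpha\mid\Lambda\alpha.V^\varepsilon$; for $A\ne\varepsilon$: $V^A::= x\mid n\mid\mathbf{true}\mid\mathbf{false}\mid\lambda x{:}\tau.V^A\mid\mathbf{fix}\,f{:}\tau\to\sigma.V^A\mid V^AV^A\mid\blacktriangleright_\alpha V^{A\alpha}\mid\Lambda\alpha.V^A\mid V^A\,B\mid\blacktriangleleft_\alpha V^{A'}$ (last only if $A'\alpha=A$, $A'\ne\varepsilon$). Big-step evaluation $\vdash^A M\Downarrow R$ ($R$ a term or $\mathbf{err}$), left-to-right call-by-value. At stage $\varepsilon$: constants and $\lambda$-abstractions evaluate to themselves; arithmetic/comparison operators compute on integer results; $\mathbf{if}$ evaluates the condition to $\mathbf{true}$/$\mathbf{false}$ then the corresponding branch; $MN\Downarrow R$ if $M\Downarrow\lambda x{:}\tau.M'$, $N\Downarrow v$, $M'[x:=v]\Downarrow R$; $\mathbf{fix}\,f{:}\tau\to\sigma.M\Downarrow R$ if $M[f:=\mathbf{fix}\,f{:}\tau\to\sigma.M]\Downarrow R$; $M\,B\Downarrow R$ if $M\Downarrow\Lambda\alpha.N$ and $N[\alpha:=B]\Downarrow R$. At any stage $A$: $\vdash^A\blacktriangleright_\alpha M\Downarrow\blacktriangleright_\alpha N$ if $\vdash^{A\alpha}M\Downarrow N$; $\vdash^A\Lambda\alpha.M\Downarrow\Lambda\alpha.N$ if $\vdash^AM\Downarrow N$. $\vdash^\alpha\blacktriangleleft_\alpha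 M\Downarrow N$ if $\vdash^\varepsilon M\Downarrow\blacktriangleright_\alpha N$; $\vdash^{A\alpha}\blacktriangleleft_\alpha M\Downarrow\blacktriangleleft_\alpha N$ if $A\ne\varepsilon$, $\vdash^AM\Downarrow N$. At stage $A\ne\varepsilon$ other constructors are rebuilt with subterms evaluated at stage $A$. $\mathbf{err}$ is produced at stage $\varepsilon$ by a variable, by an ill-shaped intermediate result (non-integer operand, non-Boolean condition, non-$\lambda$ function, non-$\Lambda$ operand of instantiation, non-$\blacktriangleright_\alpha$ operand of $\blacktriangleleft_\alpha$ at stage $\alpha$), by $\blacktriangleleft_\alpha M$ at stage $\varepsilon$, and propagates from any evaluated premise. *)

(* Defs.v *)
(* MiniML with transition variables, in de Bruijn representation
   (both term variables and transition variables are de Bruijn indices). *)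
From Stdlib Require Import List ZArith Bool Arith.
Import ListNotations.

Definition tvar := nat.
Definition trans := list tvar.

Inductive ty : Type :=
| TInt : ty
| TBool : ty
| TArr : ty -> ty -> ty
| TNext : tvar -> ty -> ty
| TAll : ty -> ty.              (* forall a. t ; binds transition index 0 *)

Inductive binop : Type := OEq | OPlus | OMinus | OTimes.

Inductive tm : Type :=
| Var : nat -> tm
| Int : Z -> tm
| Bool : bool -> tm
| Op : binop -> tm -> tm -> tm
| If : tm -> tm -> tm -> tm
| Fix : ty -> ty -> tm -> tm            (* fix f : t -> s. M ; binds term index 0 *)
| Lam : ty -> tm -> tm                  (* \x : t. M ; binds term index 0 *)
| App : tm -> tm -> tm
| Quote : tvar -> tm -> tm
| Unquote : tvar -> tm -> tm
| TLam : tm -> tm                       (* Lambda a. M ; binds transition index 0 *)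
| TApp : tm -> trans -> tm.

Fixpoint nexts (B : trans) (t : ty) : ty :=
  match B with [] => t | b :: B' => TNext b (nexts B' t) end.
Fixpoint quotes (B : trans) (M : tm) : tm :=
  match B with [] => M | b :: B' => Quote b (quotes B' M) end.
Definition unquotes (B : trans) (M : tm) : tm :=
  fold_left (fun acc b => Unquote b acc) B M.

Definition shv (d : nat) (i : tvar) : tvar := if d <=? i then S i else i.

(* substitute transition index d by B (B given relative to depth 0),
   decrementing indices above d *)
Definition tsv (d : nat) (B : trans) (i : tvar) : trans :=
  if i <? d then [i]
  else if i =? d then map (fun b => b + d) B
  else [i - 1].

Fixpoint tshift_ty (d : nat) (t : ty) : ty :=
  match t with
  | TInt => TInt | TBool => TBool
  | TArr t1 t2 => TArr (tshift_ty d t1) (tshift_ty d t2)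
  | TNext a t1 => TNext (shv d a) (tshift_ty d t1)
  | TAll t1 => TAll (tshift_ty (S d) t1)
  end.

Fixpoint tsubst_ty (d : nat) (B : trans) (t : ty) : ty :=
  match t with
  | TInt => TInt | TBool => TBool
  | TArr t1 t2 => TArr (tsubst_ty d B t1) (tsubst_ty d B t2)
  | TNext a t1 => nexts (tsv d B a) (tsubst_ty d B t1)
  | TAll t1 => TAll (tsubst_ty (S d) B t1)
  end.

Fixpoint tshift_tm (d : nat) (M : tm) : tm :=
  match M with
  | Var x => Var x | Int n => Int n | Bool b => Bool b
  | Op o M1 M2 => Op o (tshift_tm d M1) (tshift_tm d M2)
  | If M1 M2 M3 => If (tshift_tm d M1) (tshift_tm d M2) (tshift_tm d M3)
  | Fix t1 t2 M1 => Fix (tshift_ty d t1) (tshift_ty d t2) (tshift_tm d M1)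
  | Lam t M1 => Lam (tshift_ty d t) (tshift_tm d M1)
  | App M1 M2 => App (tshift_tm d M1) (tshift_tm d M2)
  | Quote a M1 => Quote (shv d a) (tshift_tm d M1)
  | Unquote a M1 => Unquote (shv d a) (tshift_tm d M1)
  | TLam M1 => TLam (tshift_tm (S d) M1)
  | TApp M1 B => TApp (tshift_tm d M1) (map (shv d) B)
  end.

Fixpoint tsubst_tm (d : nat) (B : trans) (M : tm) : tm :=
  match M with
  | Var x => Var x | Int n => Int n | Bool b => Bool b
  | Op o M1 M2 => Op o (tsubst_tm d B M1) (tsubst_tm d B M2)
  | If M1 M2 M3 => If (tsubst_tm d B M1) (tsubst_tm d B M2) (tsubst_tm d B M3)
  | Fix t1 t2 M1 => Fix (tsubst_ty d B t1) (tsubst_ty d B t2) (tsubst_tm d B M1)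
  | Lam t M1 => Lam (tsubst_ty d B t) (tsubst_tm d B M1)
  | App M1 M2 => App (tsubst_tm d B M1) (tsubst_tm d B M2)
  | Quote a M1 => quotes (tsv d B a) (tsubst_tm d B M1)
  | Unquote a M1 => unquotes (tsv d B a) (tsubst_tm d B M1)
  | TLam M1 => TLam (tsubst_tm (S d) B M1)
  | TApp M1 C => TApp (tsubst_tm d B M1) (flat_map (tsv d B) C)
  end.

Fixpoint shift_tm (c : nat) (M : tm) : tm :=
  match M with
  | Var x => Var (if c <=? x then S x else x)
  | Int n => Int n | Bool b => Bool b
  | Op o M1 M2 => Op o (shift_tm c M1) (shift_tm c M2)
  | If M1 M2 M3 => If (shift_tm c M1) (shift_tm c M2) (shift_tm c M3)
  | Fix t1 t2 M1 => Fix t1 t2 (shift_tm (S c) M1)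
  | Lam t M1 => Lam t (shift_tm (S c) M1)
  | App M1 M2 => App (shift_tm c M1) (shift_tm c M2)
  | Quote a M1 => Quote a (shift_tm c M1)
  | Unquote a M1 => Unquote a (shift_tm c M1)
  | TLam M1 => TLam (shift_tm c M1)
  | TApp M1 B => TApp (shift_tm c M1) B
  end.

Fixpoint subst_tm (k : nat) (v : tm) (M : tm) : tm :=
  match M with
  | Var x => if x =? k then v else if k <? x then Var (x - 1) else Var x
  | Int n => Int n | Bool b => Bool b
  | Op o M1 M2 => Op o (subst_tm k v M1) (subst_tm k v M2)
  | If M1 M2 M3 => If (subst_tm k v M1) (subst_tm k v M2) (subst_tm k v M3)
  | Fix t1 t2 M1 => Fix t1 t2 (subst_tm (S k) (shift_tm 0 v) M1)
  | Lam t M1 => Lam t (subst_tm (S k) (shift_tm 0 v) M1)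
  | App M1 M2 => App (subst_tm k v M1) (subst_tm k v M2)
  | Quote a M1 => Quote a (subst_tm k v M1)
  | Unquote a M1 => Unquote a (subst_tm k v M1)
  | TLam M1 => TLam (subst_tm k (tshift_tm 0 v) M1)
  | TApp M1 B => TApp (subst_tm k v M1) B
  end.

(* A context maps the term index x to [Some (t, A)] (x : t @ A) or [None]
   (x not declared). *)
Definition ctx := list (option (ty * trans)).

Definition eps_free (G : ctx) : Prop :=
  forall x t A, nth_error G x = Some (Some (t, A)) -> A <> [].

Fixpoint strip_prefix (A B : trans) : option trans :=
  match A, B with
  | [], _ => Some B
  | a :: A', b :: B' => if Nat.eqb a b then strip_prefix A' B' else None
  | _ :: _, [] => None
  end.

(* G^{-A} = { x : t @ B | x : t @ AB in G } *)
Definition ctx_minus (A : trans) (G : ctx) : ctx :=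
  map (fun e => match e with
                | Some (t, C) =>
                    match strip_prefix A C with
                    | Some B => Some (t, B)
                    | None => None
                    end
                | None => None
                end) G.

Definition ctx_tshift (G : ctx) : ctx :=
  map (fun e => match e with
                | Some (t, A) => Some (tshift_ty 0 t, map (shv 0) A)
                | None => None
                end) G.

Definition op_res_ty (o : binop) : ty :=
  match o with OEq => TBool | _ => TInt end.

Definition op_res (o : binop) (n1 n2 : Z) : tm :=
  match o with
  | OEq => Bool (Z.eqb n1 n2)
  | OPlus => Int (n1 + n2)
  | OMinus => Int (n1 - n2)
  | OTimes => Int (n1 * n2)
  end.

Inductive has_type : ctx -> trans -> tm -> ty -> Prop :=
| T_Var : forall G A x t,
    nth_error G x = Some (Some (t, A)) -> has_type G A (Var x) t
| T_Int : forall G A n, has_type G A (Int n) TInt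
| T_Bool : forall G A b, has_type G A (Bool b) TBool
| T_Op : forall G A o M N,
    has_type G A M TInt -> has_type G A N TInt ->
    has_type G A (Op o M N) (op_res_ty o)
| T_If : forall G A M N1 N2 t,
    has_type G A M TBool -> has_type G A N1 t -> has_type G A N2 t ->
    has_type G A (If M N1 N2) t
| T_Fix : forall G A t s M,
    has_type (Some (TArr t s, A) :: G) A M (TArr t s) ->
    has_type G A (Fix t s M) (TArr t s)
| T_Abs : forall G A t s M,
    has_type (Some (t, A) :: G) A M s -> has_type G A (Lam t M) (TArr t s)
| T_App : forall G A M N t s,
    has_type G A M (TArr t s) -> has_type G A N t -> has_type G A (App M N) s
| T_Quote : forall G A a M t,
    has_type G (A ++ [a]) M t -> has_type G A (Quote a M) (TNext a t)
| T_Unquote : forall G A a M t,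
    has_type G A M (TNext a t) -> has_type G (A ++ [a]) (Unquote a M) t
| T_Gen : forall G A M t,
    (* the bound variable is fresh for G and A: de Bruijn shift *)
    has_type (ctx_tshift G) (map (shv 0) A) M t -> has_type G A (TLam M) (TAll t)
| T_Ins : forall G A M t B,
    has_type G A M (TAll t) -> has_type G A (TApp M B) (tsubst_ty 0 B t).

Inductive value : trans -> tm -> Prop :=
| V_Int : forall A n, value A (Int n)
| V_Bool : forall A b, value A (Bool b)
| V_Lam0 : forall t M, value [] (Lam t M)
| V_Quote : forall A a M, value (A ++ [a]) M -> value A (Quote a M)
| V_TLam : forall A M, value (map (shv 0) A) M -> value A (TLam M)
| VA_Var : forall A x, A <> [] -> value A (Var x)
| VA_Lam : forall A t M, A <> [] -> value A M -> value A (Lam t M)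
| VA_Fix : forall A t s M, A <> [] -> value A M -> value A (Fix t s M)
| VA_App : forall A M N, A <> [] -> value A M -> value A N -> value A (App M N)
| VA_Op : forall A o M N, A <> [] -> value A M -> value A N -> value A (Op o M N)
| VA_If : forall A M N1 N2, A <> [] -> value A M -> value A N1 -> value A N2 ->
    value A (If M N1 N2)
| VA_TApp : forall A M B, A <> [] -> value A M -> value A (TApp M B)
| VA_Unquote : forall A a M, A <> [] -> value A M -> value (A ++ [a]) (Unquote a M).

Inductive res : Type := Ok (t : tm) | Err.

Inductive eval : trans -> tm -> res -> Prop :=
| E_Int : forall A n, eval A (Int n) (Ok (Int n))
| E_Bool : forall A b, eval A (Bool b) (Ok (Bool b))
| E_Lam0 : forall t M, eval [] (Lam t M) (Ok (Lam t M))
| E_Var0 : forall x, eval [] (Var x) Err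
| E_Op0 : forall o M N n1 n2,
    eval [] M (Ok (Int n1)) -> eval [] N (Ok (Int n2)) ->
    eval [] (Op o M N) (Ok (op_res o n1 n2))
| E_Op0Err1 : forall o M N, eval [] M Err -> eval [] (Op o M N) Err
| E_Op0Err2 : forall o M N v,
    eval [] M (Ok v) -> (forall n, v <> Int n) -> eval [] (Op o M N) Err
| E_Op0Err3 : forall o M N n1,
    eval [] M (Ok (Int n1)) -> eval [] N Err -> eval [] (Op o M N) Err
| E_Op0Err4 : forall o M N n1 w,
    eval [] M (Ok (Int n1)) -> eval [] N (Ok w) -> (forall n, w <> Int n) ->
    eval [] (Op o M N) Err
| E_If0True : forall M N1 N2 R,
    eval [] M (Ok (Bool true)) -> eval [] N1 R -> eval [] (If M N1 N2) R
| E_If0False : forall M N1 N2 R,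
    eval [] M (Ok (Bool false)) -> eval [] N2 R -> eval [] (If M N1 N2) R
| E_If0Err1 : forall M N1 N2, eval [] M Err -> eval [] (If M N1 N2) Err
| E_If0Err2 : forall M N1 N2 v,
    eval [] M (Ok v) -> (forall b, v <> Bool b) -> eval [] (If M N1 N2) Err
| E_App0 : forall M N t M' v R,
    eval [] M (Ok (Lam t M')) -> eval [] N (Ok v) -> eval [] (subst_tm 0 v M') R ->
    eval [] (App M N) R
| E_App0Err1 : forall M N, eval [] M Err -> eval [] (App M N) Err
| E_App0Err2 : forall M N v,
    eval [] M (Ok v) -> (forall t M', v <> Lam t M') -> eval [] (App M N) Err
| E_App0Err3 : forall M N t M',
    eval [] M (Ok (Lam t M')) -> eval [] N Err -> eval [] (App M N) Err
| E_Fix0 : forall t s M R,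
    eval [] (subst_tm 0 (Fix t s M) M) R -> eval [] (Fix t s M) R
| E_TApp0 : forall M B N R,
    eval [] M (Ok (TLam N)) -> eval [] (tsubst_tm 0 B N) R -> eval [] (TApp M B) R
| E_TApp0Err1 : forall M B, eval [] M Err -> eval [] (TApp M B) Err
| E_TApp0Err2 : forall M B v,
    eval [] M (Ok v) -> (forall N, v <> TLam N) -> eval [] (TApp M B) Err
| E_Quote : forall A a M N,
    eval (A ++ [a]) M (Ok N) -> eval A (Quote a M) (Ok (Quote a N))
| E_QuoteErr : forall A a M, eval (A ++ [a]) M Err -> eval A (Quote a M) Err
| E_TLam : forall A M N,
    eval (map (shv 0) A) M (Ok N) -> eval A (TLam M) (Ok (TLam N))
| E_TLamErr : forall A M, eval (map (shv 0) A) M Err -> eval A (TLam M) Err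
| E_Unquote0 : forall a M, eval [] (Unquote a M) Err
| E_Unquote1 : forall a M N,
    eval [] M (Ok (Quote a N)) -> eval [a] (Unquote a M) (Ok N)
| E_Unquote1Err1 : forall a M, eval [] M Err -> eval [a] (Unquote a M) Err
| E_Unquote1Err2 : forall a M v,
    eval [] M (Ok v) -> (forall N, v <> Quote a N) -> eval [a] (Unquote a M) Err
| E_UnquoteA : forall A a M N,
    A <> [] -> eval A M (Ok N) -> eval (A ++ [a]) (Unquote a M) (Ok (Unquote a N))
| E_UnquoteAErr : forall A a M,
    A <> [] -> eval A M Err -> eval (A ++ [a]) (Unquote a M) Err
| E_VarA : forall A x, A <> [] -> eval A (Var x) (Ok (Var x))
| E_OpA : forall A o M N M' N',
    A <> [] -> eval A M (Ok M') -> eval A N (Ok N') -> eval A (Op o M N) (Ok (Op o M' N'))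
| E_OpAErr1 : forall A o M N, A <> [] -> eval A M Err -> eval A (Op o M N) Err
| E_OpAErr2 : forall A o M N M',
    A <> [] -> eval A M (Ok M') -> eval A N Err -> eval A (Op o M N) Err
| E_IfA : forall A M N1 N2 M' N1' N2',
    A <> [] -> eval A M (Ok M') -> eval A N1 (Ok N1') -> eval A N2 (Ok N2') ->
    eval A (If M N1 N2) (Ok (If M' N1' N2'))
| E_IfAErr1 : forall A M N1 N2, A <> [] -> eval A M Err -> eval A (If M N1 N2) Err
| E_IfAErr2 : forall A M N1 N2 M',
    A <> [] -> eval A M (Ok M') -> eval A N1 Err -> eval A (If M N1 N2) Err
| E_IfAErr3 : forall A M N1 N2 M' N1',
    A <> [] -> eval A M (Ok M') -> eval A N1 (Ok N1') -> eval A N2 Err ->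
    eval A (If M N1 N2) Err
| E_LamA : forall A t M M',
    A <> [] -> eval A M (Ok M') -> eval A (Lam t M) (Ok (Lam t M'))
| E_LamAErr : forall A t M, A <> [] -> eval A M Err -> eval A (Lam t M) Err
| E_FixA : forall A t s M M',
    A <> [] -> eval A M (Ok M') -> eval A (Fix t s M) (Ok (Fix t s M'))
| E_FixAErr : forall A t s M, A <> [] -> eval A M Err -> eval A (Fix t s M) Err
| E_AppA : forall A M N M' N',
    A <> [] -> eval A M (Ok M') -> eval A N (Ok N') -> eval A (App M N) (Ok (App M' N'))
| E_AppAErr1 : forall A M N, A <> [] -> eval A M Err -> eval A (App M N) Err
| E_AppAErr2 : forall A M N M',
    A <> [] -> eval A M (Ok M') -> eval A N Err -> eval A (App M N) Err
| E_TAppA : forall A M B M',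
    A <> [] -> eval A M (Ok M') -> eval A (TApp M B) (Ok (TApp M' B))
| E_TAppAErr : forall A M B, A <> [] -> eval A M Err -> eval A (TApp M B) Err.

(* Main.v *)
Require Import Defs.
From Stdlib Require Import List ZArith.
Import ListNotations.
From Stdlib Require Import Lia FunctionalExtensionality.

Definition lift (s : nat -> trans) : nat -> trans :=
  fun i => match i with 0 => [0] | S j => map S (s j) end.

Fixpoint ty_sub (s : nat -> trans) (t : ty) : ty :=
  match t with
  | TInt => TInt | TBool => TBool
  | TArr t1 t2 => TArr (ty_sub s t1) (ty_sub s t2)
  | TNext a t1 => nexts (s a) (ty_sub s t1)
  | TAll t1 => TAll (ty_sub (lift s) t1)
  end.

Fixpoint tm_sub (s : nat -> trans) (M : tm) : tm :=
  match M with
  | Var x => Var x | Int n => Int n | Bool b => Bool b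
  | Op o M1 M2 => Op o (tm_sub s M1) (tm_sub s M2)
  | If M1 M2 M3 => If (tm_sub s M1) (tm_sub s M2) (tm_sub s M3)
  | Fix t1 t2 M1 => Fix (ty_sub s t1) (ty_sub s t2) (tm_sub s M1)
  | Lam t M1 => Lam (ty_sub s t) (tm_sub s M1)
  | App M1 M2 => App (tm_sub s M1) (tm_sub s M2)
  | Quote a M1 => quotes (s a) (tm_sub s M1)
  | Unquote a M1 => unquotes (s a) (tm_sub s M1)
  | TLam M1 => TLam (tm_sub (lift s) M1)
  | TApp M1 C => TApp (tm_sub s M1) (flat_map s C)
  end.

Definition comp (s r : nat -> trans) : nat -> trans := fun i => flat_map s (r i).

Lemma flat_map_single {A B} (f : A -> B) l : flat_map (fun k => [f k]) l = map f l.
Proof. induction l; simpl; congruence. Qed.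

Lemma flat_map_map {A B C} (f : B -> list C) (g : A -> B) l :
  flat_map f (map g l) = flat_map (fun x => f (g x)) l.
Proof. induction l; simpl; congruence. Qed.

Lemma flat_map_mapS (s : nat -> trans) l :
  flat_map (fun k => map S (s k)) l = map S (flat_map s l).
Proof. induction l; simpl; auto. rewrite map_app, IHl; reflexivity. Qed.

Lemma flat_map_comp s r l : flat_map s (flat_map r l) = flat_map (comp s r) l.
Proof. induction l; simpl; auto. rewrite flat_map_app, IHl; reflexivity. Qed.

Lemma lift_comp s r : lift (comp s r) = comp (lift s) (lift r).
Proof.
  apply functional_extensionality; intros [|j]; unfold comp; simpl; auto.
  rewrite flat_map_map. simpl. symmetry. apply flat_map_mapS.
Qed.

Lemma nexts_app X Y t : nexts (X ++ Y) t = nexts X (nexts Y t).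
Proof. induction X; simpl; congruence. Qed.

Lemma ty_sub_nexts s C t : ty_sub s (nexts C t) = nexts (flat_map s C) (ty_sub s t).
Proof. induction C; simpl; auto. rewrite nexts_app; congruence. Qed.

Lemma ty_sub_comp t : forall s r, ty_sub s (ty_sub r t) = ty_sub (comp s r) t.
Proof.
  induction t; intros; simpl; rewrite ?IHt1, ?IHt2, ?ty_sub_nexts, ?IHt, ?lift_comp; auto.
Qed.

Lemma lift_id : lift (fun i => [i]) = (fun i => [i]).
Proof. apply functional_extensionality; intros [|j]; reflexivity. Qed.

Lemma ty_sub_id t : ty_sub (fun i => [i]) t = t.
Proof. induction t; simpl; rewrite ?lift_id, ?IHt1, ?IHt2, ?IHt; auto. Qed.

Lemma flat_map_id (l : trans) : flat_map (fun i => [i]) l = l.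
Proof. rewrite flat_map_single, map_id; auto. Qed.

Lemma tshift_lift d : lift (fun i => [shv d i]) = (fun i => [shv (S d) i]).
Proof.
  apply functional_extensionality; intros [|j]; unfold shv; simpl; auto.
  destruct (d <=? j); auto.
Qed.

Lemma tsv_lift d B : lift (tsv d B) = tsv (S d) B.
Proof.
  apply functional_extensionality; intros [|j]; unfold tsv; simpl; auto.
  destruct (Nat.ltb_spec j d); destruct (Nat.ltb_spec (S j) (S d)); try lia; auto.
  destruct (Nat.eqb_spec j d); destruct (Nat.eqb_spec (S j) (S d)); try lia.
  - rewrite map_map; apply map_ext; intros; lia.
  - simpl. f_equal. f_equal. lia.
Qed.

Lemma tshift_ty_sub t : forall d, tshift_ty d t = ty_sub (fun i => [shv d i]) t.
Proof.
  induction t; intros; simpl; rewrite ?IHt1, ?IHt2, ?IHt, ?tshift_lift; auto.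
Qed.

Lemma tsubst_ty_sub t : forall d B, tsubst_ty d B t = ty_sub (tsv d B) t.
Proof.
  induction t; intros; simpl; rewrite ?IHt1, ?IHt2, ?IHt, ?tsv_lift; auto.
Qed.

Lemma tshift_tm_sub M : forall d, tshift_tm d M = tm_sub (fun i => [shv d i]) M.
Proof.
  induction M; intros; simpl; rewrite ?tshift_ty_sub, ?IHM1, ?IHM2, ?IHM3, ?IHM, ?tshift_lift, ?flat_map_single; auto.
Qed.

Lemma tsubst_tm_sub M : forall d B, tsubst_tm d B M = tm_sub (tsv d B) M.
Proof.
  induction M; intros; simpl; rewrite ?tsubst_ty_sub, ?IHM1, ?IHM2, ?IHM3, ?IHM, ?tsv_lift; auto.
Qed.

Definition ctx_sub (s : nat -> trans) (G : ctx) : ctx :=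
  map (fun e => match e with
                | Some (t, A) => Some (ty_sub s t, flat_map s A)
                | None => None end) G.

Definition s0 : nat -> trans := fun i => [shv 0 i].

Lemma ctx_tshift_sub G : ctx_tshift G = ctx_sub s0 G.
Proof.
  unfold ctx_tshift, ctx_sub; apply map_ext; intros [[t A]|]; auto.
  rewrite tshift_ty_sub. unfold s0. rewrite flat_map_single. auto.
Qed.

Lemma ctx_sub_comp s r G : ctx_sub s (ctx_sub r G) = ctx_sub (comp s r) G.
Proof.
  unfold ctx_sub; rewrite map_map; apply map_ext; intros [[t A]|]; auto.
  rewrite ty_sub_comp, flat_map_comp; auto.
Qed.

Lemma ctx_sub_id G : ctx_sub (fun i => [i]) G = G.
Proof.
  unfold ctx_sub. rewrite <- (map_id G) at 2. apply map_ext; intros [[t A]|]; auto.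
  rewrite ty_sub_id, flat_map_id; auto.
Qed.

Lemma comp_lift_s0 s : comp (lift s) s0 = comp s0 s.
Proof.
  apply functional_extensionality; intros i; unfold comp, s0; simpl.
  rewrite app_nil_r, flat_map_single. apply map_ext. reflexivity.
Qed.

Lemma comp_tsv_s0 B : comp (tsv 0 B) s0 = (fun i => [i]).
Proof.
  apply functional_extensionality; intros i; unfold comp, s0, tsv; simpl.
  rewrite Nat.sub_0_r; auto.
Qed.

Lemma map_add0 (l : trans) : map (fun b => b + 0) l = l.
Proof. rewrite <- (map_id l) at 2. apply map_ext; intros; lia. Qed.

Lemma ty_sub_tsubst s B t :
  ty_sub s (tsubst_ty 0 B t) = tsubst_ty 0 (flat_map s B) (ty_sub (lift s) t).
Proof.
  rewrite !tsubst_ty_sub, !ty_sub_comp. f_equal.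
  apply functional_extensionality; intros [|j]; unfold comp, tsv; simpl.
  - rewrite !map_add0, app_nil_r; auto.
  - rewrite app_nil_r, flat_map_map. simpl.
    rewrite Nat.sub_0_r.
    rewrite (flat_map_ext (fun x => [x-0]) (fun x => [x])) by (intros; rewrite Nat.sub_0_r; auto).
    rewrite flat_map_id; auto.
Qed.

Lemma quotes_typing G X Bs M t :
  has_type G (X ++ Bs) M t -> has_type G X (quotes Bs M) (nexts Bs t).
Proof.
  revert X; induction Bs; intros X H; simpl.
  - rewrite app_nil_r in H; auto.
  - constructor. apply IHBs. rewrite <- app_assoc; auto.
Qed.

Lemma unquotes_typing G Bs : forall X M t,
  has_type G X M (nexts Bs t) -> has_type G (X ++ Bs) (unquotes Bs M) t.
Proof.
  induction Bs; intros X M t H; simpl.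
  - rewrite app_nil_r; auto.
  - unfold unquotes; simpl. fold (unquotes Bs (Unquote a M)).
    replace (X ++ a :: Bs) with ((X ++ [a]) ++ Bs) by (rewrite <- app_assoc; auto).
    apply IHBs. constructor. auto.
Qed.

Lemma typing_sub G A M t : has_type G A M t ->
  forall sg, has_type (ctx_sub sg G) (flat_map sg A) (tm_sub sg M) (ty_sub sg t).
Proof.
  induction 1; intros sg; simpl in *.
  - constructor. unfold ctx_sub. rewrite (map_nth_error _ _ _ H); reflexivity.
  - constructor.
  - constructor.
  - replace (ty_sub sg (op_res_ty o)) with (op_res_ty o) by (destruct o; auto).
    constructor; auto.
  - constructor; auto.
  - constructor. apply (IHhas_type sg).
  - constructor. apply (IHhas_type sg).
  - econstructor; [apply (IHhas_type1 sg)| apply IHhas_type2].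
  - apply quotes_typing. specialize (IHhas_type sg). rewrite flat_map_app in IHhas_type.
    simpl in IHhas_type. rewrite app_nil_r in IHhas_type. auto.
  - rewrite flat_map_app. simpl. rewrite app_nil_r. apply unquotes_typing. apply IHhas_type.
  - constructor. specialize (IHhas_type (lift sg)).
    rewrite !ctx_tshift_sub in *. rewrite ctx_sub_comp, comp_lift_s0, <- ctx_sub_comp in IHhas_type.
    replace (map (shv 0) (flat_map sg A)) with (flat_map s0 (flat_map sg A)).
    2:{ unfold s0; rewrite flat_map_single; auto. }
    replace (map (shv 0) A) with (flat_map s0 A) in IHhas_type.
    2:{ unfold s0; rewrite flat_map_single; auto. }
    rewrite flat_map_comp, comp_lift_s0, <- flat_map_comp in IHhas_type. auto.
  - rewrite ty_sub_tsubst. constructor. apply (IHhas_type sg).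
Qed.

Lemma nth_map_opt {A B} (f : A -> B) l n : nth_error (map f l) n = option_map f (nth_error l n).
Proof. revert n; induction l; intros [|n]; simpl; auto. Qed.

Lemma weaken G A M t : has_type G A M t -> forall G' c,
  (forall x, nth_error G' (if c <=? x then S x else x) = nth_error G x) ->
  has_type G' A (shift_tm c M) t.
Proof.
  induction 1; intros G' c HG; simpl.
  - constructor. rewrite HG; auto.
  - constructor.
  - constructor.
  - constructor; auto.
  - constructor; auto.
  - constructor. apply IHhas_type. intros [|y]; simpl; auto.
    specialize (HG y). destruct (c <=? y); simpl; auto.
  - constructor. apply IHhas_type. intros [|y]; simpl; auto.
    specialize (HG y). destruct (c <=? y); simpl; auto.
  - econstructor; eauto.
  - constructor; auto.
  - constructor; auto.
  - constructor. apply IHhas_type. intros x. unfold ctx_tshift. rewrite !nth_map_opt, HG; auto.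
  - constructor; auto.
Qed.

Lemma tshift_typing G A v s :
  has_type G A v s -> has_type (ctx_tshift G) (map (shv 0) A) (tshift_tm 0 v) (tshift_ty 0 s).
Proof.
  intros H0. pose proof (typing_sub _ _ _ _ H0 s0) as H.
  rewrite ctx_tshift_sub, tshift_tm_sub, tshift_ty_sub.
  unfold s0 in *. rewrite flat_map_single in H. auto.
Qed.

Lemma subst_typing G A M t : has_type G A M t -> forall k v s A0 G',
  nth_error G k = Some (Some (s, A0)) -> has_type G' A0 v s ->
  (forall x, x < k -> nth_error G' x = nth_error G x) ->
  (forall x, k < x -> nth_error G' (x - 1) = nth_error G x) ->
  has_type G' A (subst_tm k v M) t.
Proof.
  induction 1; intros k v s' A0 G' Hk Hv HL HR; simpl.
  - destruct (Nat.eqb_spec x k).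
    + subst. rewrite H in Hk. inversion Hk; subst; auto.
    + destruct (Nat.ltb_spec k x).
      * constructor. rewrite HR; auto.
      * constructor. rewrite HL; auto. lia.
  - constructor.
  - constructor.
  - constructor; eauto.
  - constructor; eauto.
  - constructor. eapply IHhas_type.
    + simpl; exact Hk.
    + eapply weaken; [exact Hv|]. intros; simpl; auto.
    + intros [|y] Hy; simpl; auto. apply HL; lia.
    + intros [|y] Hy; simpl; [lia|]. destruct y as [|z]; [lia|].
      replace (S (S z) - 1) with (S z) by lia.
      change (nth_error G' z = nth_error G (S z)).
      rewrite <- HR by lia. f_equal; lia.
  - constructor. eapply IHhas_type.
    + simpl; exact Hk.
    + eapply weaken; [exact Hv|]. intros; simpl; auto.
    + intros [|y] Hy; simpl; auto. apply HL; lia.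
    + intros [|y] Hy; simpl; [lia|]. destruct y as [|z]; [lia|].
      replace (S (S z) - 1) with (S z) by lia.
      change (nth_error G' z = nth_error G (S z)).
      rewrite <- HR by lia. f_equal; lia.
  - econstructor; eauto.
  - constructor; eauto.
  - constructor; eauto.
  - constructor. eapply IHhas_type with (s := tshift_ty 0 s') (A0 := map (shv 0) A0).
    + unfold ctx_tshift. exact (map_nth_error _ _ _ Hk).
    + apply tshift_typing; eauto.
    + intros; unfold ctx_tshift; rewrite !nth_map_opt; f_equal; auto.
    + intros; unfold ctx_tshift; rewrite !nth_map_opt; f_equal; auto.
  - constructor; eauto.
Qed.

Lemma app_single_nil {X} (A : list X) a : A ++ [a] <> [].
Proof. destruct A; simpl; discriminate. Qed.

Ltac nilcontra := match goal with
  | H : _ ++ [_] = [] |- _ => exfalso; exact (app_single_nil _ _ H)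
  | H : [] = _ ++ [_] |- _ => exfalso; exact (app_single_nil _ _ (eq_sym H))
  end.

Lemma canon G v t : value [] v -> has_type G [] v t ->
  match t with
  | TInt => exists n, v = Int n
  | TBool => exists b, v = Bool b
  | TArr _ _ => exists t' M', v = Lam t' M'
  | TNext a _ => exists N, v = Quote a N
  | TAll _ => exists N, v = TLam N
  end.
Proof.
  intros Hv Ht; inversion Hv; subst; try congruence; try nilcontra;
  inversion Ht; subst; eauto.
Qed.

Lemma nth_ctx_tshift (G : ctx) x : nth_error (ctx_tshift G) x =
  match nth_error G x with
  | Some (Some (t, A)) => Some (Some (tshift_ty 0 t, map (shv 0) A))
  | Some None => Some None
  | None => None end.
Proof. revert x; induction G as [|a G IH]; intros [|x]; simpl; auto. destruct a as [[]|]; auto. Qed.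

Lemma eps_free_tshift G : eps_free G -> eps_free (ctx_tshift G).
Proof.
  unfold eps_free; intros H x t A Hx.
  rewrite nth_ctx_tshift in Hx. destruct (nth_error G x) as [[[t' A']|]|] eqn:E; simpl in Hx; try discriminate.
  inversion Hx; subst. apply H in E. intro Hc. destruct A'; simpl in Hc; [apply E; auto | discriminate].
Qed.

Lemma eps_free_cons G t A : eps_free G -> A <> [] -> eps_free (Some (t, A) :: G).
Proof.
  unfold eps_free; intros H HA [|x] t' A' Hx; simpl in Hx; eauto.
  inversion Hx; subst; auto.
Qed.

Lemma snoc_single {X} (A : list X) a b : A ++ [a] = [b] -> A = [] /\ a = b.
Proof.
  intros H. destruct A as [|c A]; simpl in H; inversion H; subst; auto.
  exfalso; eapply app_single_nil; eauto.
Qed.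

Lemma tsubst_typing G N t B :
  has_type (ctx_tshift G) [] N t -> has_type G [] (tsubst_tm 0 B N) (tsubst_ty 0 B t).
Proof.
  intros H. pose proof (typing_sub _ _ _ _ H (tsv 0 B)) as H'.
  rewrite ctx_tshift_sub, ctx_sub_comp, comp_tsv_s0, ctx_sub_id in H'.
  rewrite tsubst_tm_sub, tsubst_ty_sub. exact H'.
Qed.

Ltac use_ih := repeat match goal with
 | IH : forall G t, eps_free G -> has_type G ?A ?M t -> _ , Ht : has_type ?G ?A ?M ?t |- _ =>
     let E := fresh "E" in
     destruct (IH G t ltac:(eauto using eps_free_tshift, eps_free_cons) Ht) as [? [E [? ?]]];
     clear IH; try discriminate E; inversion E; subst
 end.

Lemma pres A M R : eval A M R -> forall G t, eps_free G -> has_type G A M t ->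
  exists v, R = Ok v /\ value A v /\ has_type G A v t.
Proof.
  induction 1; intros G T HG Ht; inversion Ht; subst; try nilcontra;
  repeat match goal with H : _ ++ [_] = [_] |- _ => destruct (snoc_single _ _ _ H); clear H; subst end;
  repeat match goal with H : _ ++ [_] = _ ++ [_] |- _ => destruct (app_inj_tail _ _ _ _ H); clear H; subst end;
  use_ih;
  try (eexists; repeat split; try (constructor; eauto; fail); try (econstructor; eauto; fail); fail).
  all: try (eexists; repeat split; eauto; fail).
  all: try (exfalso; eapply HG; [eassumption|reflexivity]).
  all: try (match goal with Hv: value [] ?v, Hvt: has_type _ [] ?v _, Hn: forall _, ?v <> _ |- _ =>
    let C := fresh in pose proof (canon _ _ _ Hv Hvt) as C; simpl in C;
    match type of C with | exists _ _, _ => destruct C as [? [? C]] | exists _, _ => destruct C as [? C] end; subst; exfalso; eapply Hn; eauto end).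
  all: try (match goal with Hv: value [] ?v, Hvt: has_type _ [] ?v _, Hn: forall _ _, ?v <> _ |- _ =>
    let C := fresh in pose proof (canon _ _ _ Hv Hvt) as C; simpl in C;
    match type of C with | exists _ _, _ => destruct C as [? [? C]] | exists _, _ => destruct C as [? C] end; subst; exfalso; eapply Hn; eauto end).
  - eexists; split; [reflexivity|]; destruct o; split; constructor.
  - match goal with H: has_type _ [] (Lam _ _) _ |- _ => inversion H; subst end.
    apply IHeval3; [exact HG|].
    eapply subst_typing; [eassumption|reflexivity|eassumption|intros; lia|].
    intros [|y] Hy; [lia|]; simpl; rewrite Nat.sub_0_r; reflexivity.
  - apply IHeval; [exact HG|].
    eapply subst_typing; [eassumption|reflexivity|exact Ht|intros; lia|].
    intros [|y] Hy; [lia|]; simpl; rewrite Nat.sub_0_r; reflexivity.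
  - match goal with H: has_type _ [] (TLam _) _ |- _ => inversion H; subst end.
    apply IHeval2; [exact HG|]. apply tsubst_typing. simpl in *. assumption.
  - match goal with H: has_type _ [] (Quote _ _) _ |- _ => inversion H; subst end.
    match goal with H: value [] (Quote _ _) |- _ => inversion H; subst end.
    eexists; repeat split; eauto.
Qed.

Lemma strip_shift a C : strip_prefix [shv 0 a] (map (shv 0) C) =
  option_map (map (shv 0)) (strip_prefix [a] C).
Proof.
  destruct C as [|c C]; simpl; auto.
  destruct (Nat.eqb a c); auto.
Qed.

Lemma minus_tshift a G : ctx_minus [shv 0 a] (ctx_tshift G) = ctx_tshift (ctx_minus [a] G).
Proof.
  unfold ctx_minus, ctx_tshift; rewrite !map_map; apply map_ext.
  intros [[t C]|]; auto. rewrite strip_shift. destruct (strip_prefix [a] C); auto.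
Qed.

Lemma minus_cons a A t G :
  ctx_minus [a] (Some (t, a :: A) :: G) = Some (t, A) :: ctx_minus [a] G.
Proof. simpl. rewrite Nat.eqb_refl. reflexivity. Qed.

Lemma minus_typing G A' N t : has_type G A' N t -> forall a A, A' = a :: A -> value A' N ->
  has_type (ctx_minus [a] G) A N t.
Proof.
  induction 1; intros a0 A0 EA Hv; subst.
  - constructor. unfold ctx_minus. erewrite map_nth_error; [|exact H]. simpl.
    rewrite Nat.eqb_refl. reflexivity.
  - constructor.
  - constructor.
  - inversion Hv; subst. constructor; eauto.
  - inversion Hv; subst. constructor; eauto.
  - inversion Hv; subst. constructor. rewrite <- minus_cons. eauto.
  - inversion Hv; subst. constructor. rewrite <- minus_cons. eauto.
  - inversion Hv; subst. econstructor; eauto.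
  - inversion Hv; subst. constructor. eapply IHhas_type; eauto; reflexivity.
  - inversion Hv; subst.
    match goal with H : _ ++ [_] = _ ++ [_] |- _ => destruct (app_inj_tail _ _ _ _ H); subst end.
    destruct A as [|c A]; [congruence|].
    simpl in EA. inversion EA; subst. constructor. eauto.
  - inversion Hv; subst. constructor. rewrite <- minus_tshift. eapply IHhas_type; eauto.
    all: try reflexivity.
  - inversion Hv; subst. constructor. eauto.
Qed.

Theorem mainTheorem13 :
  forall (G : ctx) (M : tm) (t : ty) (R : res),
    eps_free G ->
    has_type G [] M t ->
    eval [] M R ->
    exists v : tm,
      R = Ok v /\ value [] v /\ has_type G [] v t /\
      (forall (a : tvar) (t0 : ty),
          t = TNext a t0 ->
          exists N : tm, v = Quote a N /\ has_type (ctx_minus [a] G) [] N t0).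
Proof.
  intros G M t R HG Ht He.
  destruct (pres _ _ _ He G t HG Ht) as [v [E [Hv Hvt]]].
  exists v; repeat split; auto.
  intros a t0 Et; subst.
  destruct (canon _ _ _ Hv Hvt) as [N EN]; subst.
  exists N; split; auto.
  inversion Hvt; subst. inversion Hv; subst.
  eapply minus_typing; eauto.
Qed.
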